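(* Let $d\in\mathbb{Z}_2$ with $d\equiv0\pmod 4$ and $\sqrt d\notin\mathbb{Z}_2$, and $f(x)=x^2+x-d$ on $\mathbb{Z}_2$. Then $f(1+2\mathbb{Z}_2)\subset 2\mathbb{Z}_2$ and $2\mathbb{Z}_2$ is a disjoint union of finitely many minimal components. More precisely, let $n_0=\lfloor v_2(d)/2\rfloor+1$. (1) If $v_2(d)=2$ and $v_2(d-4)=3$, then $2\mathbb{Z}_2$ consists of the three minimal components $4\mathbb{Z}_2$, $2+8\mathbb{Z}_2$, $6+8\mathbb{Z}_2$. (2) If $v_2(d)=2$ and $v_2(d-4)=4$, then $2\mathbb{Z}_2$ consists of the five minimal components $4\mathbb{Z}_2$, $2+16\mathbb{Z}_2$, $6+16\mathbb{Z}_2$, $10+16\mathbb{Z}_2$, $14+16\mathbb{Z}_2$. (3) If $v_2(d)\ge3$ and $v_2(d)$ is odd, then $2\mathbb{Z}_2=E_1\sqcup E_2$ with $$E_1=\bigsqcup_{2\le n\le n_0}\big(2^{n-1}+2^n\mathbb{Z}_2\big)-\{\text{I-}[n-2]\},\qquad E_2=2^{n_0}\mathbb{Z}_2-\{\text{I-}[n_0-1]\}.$$ (4) If $v_2(d)\ge3$ and $v_2(d)$ is even, then $2\mathbb{Z}_2=E'_1\sqcup E'_2\sqcup E'_3$ with $$E'_1=\bigsqcup_{2\le n\le n_0-1}\big(2^{n-1}+2^n\mathbb{Z}_2\big)-\{\text{I-}[n-2]\},\quad E'_2=2^{n_0}\mathbb{Z}_2-\{\text{I-}[n_0-2]\},$$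 $$E'_3=\big(2^{n_0-1}+2^{n_0}\mathbb{Z}_2\big)-\{\text{I-}[v_2(d-2^{v_2(d)})-n_0]\}.$$
   Context: $v_2$ is the $2$-adic valuation. A minimal component of $f$ is a clopen set $E$ with $f(E)\subset E$ and $f:E\to E$ minimal (all orbits dense). For $n\ge1$, $f_n$ is the induced map on $\mathbb{Z}/2^n\mathbb{Z}$, $f_n(x\bmod 2^n)=f(x)\bmod 2^n$. A cycle of $f_n$ (at level $n$) of length $k$ is a tuple $\sigma=(x_1,\dots,x_k)$ of distinct elements with $f_n(x_i)=x_{i+1}$, $f_n(x_k)=x_1$. The set $X_\sigma=\{y\in\mathbb{Z}/2^{n+1}\mathbb{Z}:y\bmod 2^n\in\sigma\}$ is $f_{n+1}$-invariant; its cycles are the lifts of $\sigma$. $\sigma$ grows if $X_\sigma$ is a single cycle of length $2k$ and splits if it is a union of two cycles of length $k$. For $k\ge0$, ''$\sigma$ splits $k$ times and then its lifts grow forever'' means every cycle at levels $n,\dots,n+k-1$ lying above $\sigma$ (reducing mod $2^n$ into $\sigma$) splits, and every cycle at every level $\ge n+k$ lying above $\sigma$ grows. A ball $F=x+2^n\mathbb{Z}_2$ with $(x\bmod 2^n)$ a fixed point of $f_n$ is of type I-$[k]$ if this 1-cycle splits $k$ times and then its lifts grow forever (then $F$ is a disjoint union of $2^k$ balls of radius $2^{-n-k}$, each a minimal component). $E=\bigsqcup_{n\in J}F_n-\{\text{I-}[k]\}$ means $E$ is the disjoint union of the $F_n$, each of type I-$[k]$ ($k$ possibly depending on $n$ as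 indicated); $F-\{\text{I-}[k]\}$ for a single set means $F$ is of type I-$[k]$. *)

(* Defs.v *)
(* The ring Z_2 of 2-adic integers is built as the inverse
   limit of Z/2^n Z: an element is a sequence of integers x_n with
   x_{n+1} = x_n (mod 2^n); its residue at level n is x_n mod 2^n. *)
From HB Require Import structures.
From mathcomp Require Import all_boot all_order all_algebra.
Set Implicit Arguments. Unset Strict Implicit. Unset Printing Implicit Defensive.
Import Order.TTheory GRing.Theory Num.Theory.
Local Open Scope ring_scope.

Definition pw (n : nat) : int := ((2 ^ n)%N)%:Z.

Definition compat (x : nat -> int) := forall n : nat, (x n.+1 = x n %[mod pw n])%Z.
Definition Z2 := {x : nat -> int | compat x}.

Definition res (x : Z2) (n : nat) : int := (sval x n %% pw n)%Z.

Definition eqZ2 (x y : Z2) : Prop := forall n, res x n = res y n.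

Lemma compat_const (c : int) : compat (fun _ => c).
Proof. by []. Qed.
Lemma compat_add (x y : Z2) : compat (fun n => sval x n + sval y n).
Proof. move=> n; by rewrite -modzDm (proj2_sig x n) (proj2_sig y n) modzDm. Qed.
Lemma compat_mul (x y : Z2) : compat (fun n => sval x n * sval y n).
Proof. move=> n; by rewrite -modzMm (proj2_sig x n) (proj2_sig y n) modzMm. Qed.
Lemma compat_opp (x : Z2) : compat (fun n => - sval x n).
Proof. move=> n; by rewrite -modzNm (proj2_sig x n) modzNm. Qed.

Definition Z2const (c : int) : Z2 := exist _ (fun _ => c) (compat_const c).
Definition Z2add (x y : Z2) : Z2 := exist _ _ (compat_add x y).
Definition Z2mul (x y : Z2) : Z2 := exist _ _ (compat_mul x y).
Definition Z2opp (x : Z2) : Z2 := exist _ _ (compat_opp x).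
Definition Z2sub (x y : Z2) : Z2 := Z2add x (Z2opp y).

Definition val2 (x : Z2) (k : nat) : Prop := res x k = 0 /\ res x k.+1 <> 0.

Definition fmap (d x : Z2) : Z2 := Z2sub (Z2add (Z2mul x x) x) d.

(** induced map f_n on Z/2^nZ (elements represented by integers in [0,2^n)):
    f_n(r) = f(r) mod 2^n *)
Definition fn (d : Z2) (n : nat) (r : int) : int := res (fmap d (Z2const r)) n.

Definition ball (c : int) (n : nat) : Z2 -> Prop := fun x => res x n = (c %% pw n)%Z.

Definition openZ2 (E : Z2 -> Prop) : Prop :=
  forall x, E x -> exists n, forall y, res y n = res x n -> E y.
Definition closedZ2 (E : Z2 -> Prop) : Prop := openZ2 (fun x => ~ E x).
Definition clopenZ2 (E : Z2 -> Prop) : Prop := openZ2 E /\ closedZ2 E.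

Definition orbit_dense (d : Z2) (E : Z2 -> Prop) (x : Z2) : Prop :=
  forall y, E y -> forall n, exists k, res (iter k (fmap d) x) n = res y n.

Definition minimal_component (d : Z2) (E : Z2 -> Prop) : Prop :=
  [/\ clopenZ2 E, exists x, E x,
      (forall x, E x -> E (fmap d x)) &
      (forall x, E x -> orbit_dense d E x)].

Definition emptyZ2 : Z2 -> Prop := fun _ => False.

Definition disjoint_union (S : Z2 -> Prop) (Es : seq (Z2 -> Prop)) : Prop :=
  (forall x, S x <-> exists2 i, (i < size Es)%N & nth emptyZ2 Es i x) /\
  (forall i j x, (i < j < size Es)%N ->
     ~ (nth emptyZ2 Es i x /\ nth emptyZ2 Es j x)).

Definition min_decomp (d : Z2) (S : Z2 -> Prop) (Es : seq (Z2 -> Prop)) : Prop :=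
  disjoint_union S Es /\
  (forall i, (i < size Es)%N -> minimal_component d (nth emptyZ2 Es i)).

Definition cycle_at (d : Z2) (n : nat) (s : seq int) : bool :=
  [&& s != [::], uniq s, all (fun y => (0 <= y) && (y < pw n)) s
    & fcycle (fn d n) s].

Definition Xlift (n : nat) (s : seq int) (y : int) : Prop :=
  (0 <= y) && (y < pw n.+1) /\ (y %% pw n)%Z \in s.

Definition grows (d : Z2) (n : nat) (s : seq int) : Prop :=
  exists t, [/\ cycle_at d n.+1 t, size t = (2 * size s)%N &
                forall y, y \in t <-> Xlift n s y].

Definition splits (d : Z2) (n : nat) (s : seq int) : Prop :=
  exists t1 t2, [/\ cycle_at d n.+1 t1 /\ cycle_at d n.+1 t2,
     size t1 = size s /\ size t2 = size s,
     (forall y, y \in t1 -> y \notin t2) &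
     forall y, (y \in t1 \/ y \in t2) <-> Xlift n s y].

Definition above (n : nat) (s t : seq int) : bool :=
  all (fun y => (y %% pw n)%Z \in s) t.

Definition splits_then_grows (d : Z2) (n : nat) (s : seq int) (k : nat) : Prop :=
  (forall m t, (n <= m < n + k)%N -> cycle_at d m t -> above n s t ->
      splits d m t) /\
  (forall m t, (n + k <= m)%N -> cycle_at d m t -> above n s t ->
      grows d m t).

Definition typeI (d : Z2) (n : nat) (c : int) (k : nat) : Prop :=
  let r := (c %% pw n)%Z in fn d n r = r /\ splits_then_grows d n [:: r] k.

(* Main.v *)
Require Import Defs.
From HB Require Import structures.
From mathcomp Require Import all_boot all_order all_algebra.
From mathcomp Require Import zify ring lra.
From Stdlib Require Import Classical_Prop.
Import Order.TTheory GRing.Theory Num.Theory.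
Set Implicit Arguments. Unset Strict Implicit. Unset Printing Implicit Defensive.
Local Open Scope ring_scope.


Definition cg (m : nat) (a b : int) := (pw m %| a - b)%Z.

Lemma pw_gt0 n : 0 < pw n.
Proof. by rewrite /pw ltz_nat expn_gt0. Qed.
Lemma pw_neq0 n : pw n != 0.
Proof. by rewrite gt_eqF // pw_gt0. Qed.
Lemma pwS n : pw n.+1 = 2 * pw n.
Proof. by rewrite /pw expnS PoszM. Qed.
Lemma pwD m n : pw (m + n) = pw m * pw n.
Proof. by rewrite /pw expnD PoszM. Qed.
Lemma pw0 : pw 0 = 1. Proof. by []. Qed.
Lemma pw_dvd m n : (m <= n)%N -> (pw m %| pw n)%Z.
Proof. move=> h; rewrite -(subnKC h) pwD; exact: dvdz_mulr. Qed.

Lemma cg_refl m a : cg m a a. Proof. by rewrite /cg subrr dvdz0. Qed.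
Lemma cg_sym m a b : cg m a b -> cg m b a.
Proof. by rewrite /cg -opprB rpredN. Qed.
Lemma cg_trans m a b c : cg m a b -> cg m b c -> cg m a c.
Proof. rewrite /cg => h1 h2; have ->: a - c = (a - b) + (b - c) by ring. exact: rpredD. Qed.
Lemma cg_le m n a b : (m <= n)%N -> cg n a b -> cg m a b.
Proof. move=> h; apply: dvdz_trans; exact: pw_dvd. Qed.
Lemma cgD m a b a' b' : cg m a b -> cg m a' b' -> cg m (a + a') (b + b').
Proof. rewrite /cg => h1 h2; have ->: a + a' - (b + b') = (a - b) + (a' - b') by ring. exact: rpredD. Qed.
Lemma cgN m a b : cg m a b -> cg m (- a) (- b).
Proof. rewrite /cg => h; have ->: - a - - b = - (a - b) by ring. by rewrite rpredN. Qed.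
Lemma cgB m a b a' b' : cg m a b -> cg m a' b' -> cg m (a - a') (b - b').
Proof. by move=> h1 h2; apply: cgD => //; apply: cgN. Qed.
Lemma cgM m a b a' b' : cg m a b -> cg m a' b' -> cg m (a * a') (b * b').
Proof.
rewrite /cg => h1 h2; have ->: a * a' - b * b' = (a - b) * a' + b * (a' - b') by ring.
by apply: rpredD; [apply: dvdz_mulr | apply: dvdz_mull].
Qed.
Lemma cg_mod m a : cg m (a %% pw m)%Z a.
Proof. by rewrite /cg -eqz_mod_dvd modz_mod. Qed.
Lemma cg_modE m a b : cg m a b <-> (a %% pw m = b %% pw m)%Z.
Proof. by rewrite /cg -eqz_mod_dvd; split => /eqP. Qed.
Lemma mod_small_pw m a : 0 <= a < pw m -> (a %% pw m)%Z = a.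
Proof. exact: modz_small. Qed.
Lemma mod_range m a : 0 <= (a %% pw m)%Z < pw m.
Proof.
rewrite modz_ge0 ?pw_neq0 //=.
have := ltz_mod a (pw_neq0 m). by rewrite gtr0_norm ?pw_gt0.
Qed.

Lemma sval_cg (x : Z2) m n : (m <= n)%N -> cg m (sval x n) (sval x m).
Proof.
move=> h; elim: n h => [|n IH] h.
  by rewrite leqn0 in h; rewrite (eqP h) cg_refl.
rewrite leq_eqVlt in h; case/orP: h => [/eqP -> | h]; first exact: cg_refl.
apply: (@cg_trans _ _ (sval x n)); last exact: IH.
rewrite ltnS in h; apply: (cg_le h).
rewrite cg_modE. exact: (proj2_sig x n).
Qed.

Lemma res_eqE (x y : Z2) m : res x m = res y m <-> cg m (sval x m) (sval y m).
Proof. by rewrite cg_modE. Qed.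

Lemma res_low (x : Z2) m n : (m <= n)%N -> res x m = (res x n %% pw m)%Z.
Proof.
move=> h; rewrite /res. apply/cg_modE.
apply: (cg_trans (cg_sym (sval_cg x h))). apply: cg_sym; apply: (cg_le h); exact: cg_mod.
Qed.


Lemma par (s : int) : (2 %| s)%Z \/ (2 %| s - 1)%Z.
Proof.
have [h|h] := boolP (2 %| s)%Z; first by left.
right; apply/dvdz_mod0P; move/dvdz_mod0P: h => h. lia.
Qed.

Definition F (D x : int) : int := x * x + x - D.

Lemma sval_iter d x k m : sval (iter k (fmap d) x) m = iter k (F (sval d m)) (sval x m).
Proof. by elim: k => //= k ->. Qed.

Lemma fnE d m r : fn d m r = (F (sval d m) r %% pw m)%Z.
Proof. by []. Qed.

Lemma F_cg m D D' x x' : cg m D D' -> cg m x x' -> cg m (F D x) (F D' x').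
Proof. move=> hD hx; rewrite /F; apply: cgB => //; apply: cgD => //; exact: cgM. Qed.

Lemma iterF_cg m D D' x x' k : cg m D D' -> cg m x x' ->
  cg m (iter k (F D) x) (iter k (F D') x').
Proof. move=> hD hx; elim: k => //= k IH; exact: F_cg. Qed.

Lemma iter_fn d m k r : cg m (iter k (fn d m) r) (iter k (F (sval d m)) r).
Proof.
elim: k => /= [|k IH]; first exact: cg_refl.
rewrite fnE; apply: cg_trans (cg_mod _ _) _; apply: F_cg => //; exact: cg_refl.
Qed.

Lemma iter_fn_range d m k r : 0 <= r < pw m -> 0 <= iter k (fn d m) r < pw m.
Proof. by case: k => //= k _; rewrite fnE mod_range. Qed.

Definition EVH D c p := forall x, cg p x c -> (pw p.+1 %| x * x - D - pw p)%Z.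

Lemma core_in D c p x : EVH D c p -> cg p x c -> cg p (F D x) c.
Proof.
move=> hE hx; rewrite /cg.
have ->: F D x - c = (x - c) + (x * x - D - pw p) + pw p by rewrite /F; ring.
apply: rpredD; last exact: dvdzz.
apply: rpredD => //; apply: dvdz_trans (hE x hx); apply: pw_dvd; exact: leqnSn.
Qed.

Lemma core_iter_in D c p x k : EVH D c p -> cg p x c -> cg p (iter k (F D) x) c.
Proof. move=> hE hx; elim: k => //= k IH; exact: core_in. Qed.

Lemma iter2S (T : Type) (f : T -> T) j x :
  iter (2 ^ j.+1) f x = iter (2 ^ j) f (iter (2 ^ j) f x).
Proof. by rewrite -iterD expnS mul2n -addnn. Qed.

Lemma core_main D c p : (2 <= p)%N -> (2 %| c)%Z -> EVH D c p -> forall j,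
  (forall x y, cg p x c -> cg p y c ->
     (4 * (y - x) %| (iter (2 ^ j) (F D) y - iter (2 ^ j) (F D) x) - (y - x))%Z) /\
  (forall x, cg p x c -> (pw (p + j).+1 %| iter (2 ^ j) (F D) x - x - pw (p + j))%Z).
Proof.
move=> hp hc hE; elim=> [|j [IHb IHc]].
  split=> [x y hx hy|x hx] /=; last first.
    rewrite addn0 /F.
    have ->: x * x + x - D - x - pw p = x * x - D - pw p by ring.
    exact: hE.
  have ->: F D y - F D x - (y - x) = (y - x) * (y + x) by rewrite /F; ring.
  rewrite mulrC; apply: dvdz_mul; last exact: dvdzz.
  have ->: y + x = (y - c) + (x - c) + 2 * c by ring.
  have h4 : (4 %| pw p)%Z by apply: (@pw_dvd 2 p).
  apply: rpredD; first apply: rpredD.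
  - exact: dvdz_trans h4 hy.
  - exact: dvdz_trans h4 hx.
  - by have ->: (4 : int) = 2 * 2 by []; apply: dvdz_mul.
set H := iter (2 ^ j) (F D).
have Hin x : cg p x c -> cg p (H x) c by move=> hx; exact: core_iter_in.
split=> [x y hx hy|x hx]; rewrite !iter2S -/H.
  have e1 := IHb x y hx hy.
  have e2 := IHb (H x) (H y) (Hin x hx) (Hin y hy).
  have ->: H (H y) - H (H x) - (y - x) =
     (H (H y) - H (H x) - (H y - H x)) + (H y - H x - (y - x)) by ring.
  apply: rpredD => //; apply: dvdz_trans e2; apply: dvdz_mul; first exact: dvdzz.
  have ->: H y - H x = (H y - H x - (y - x)) + (y - x) by ring.
  apply: rpredD; last exact: dvdzz.
  apply: dvdz_trans e1; exact: dvdz_mull.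
have e1 := IHb x (H x) hx (Hin x hx).
have e2 := IHc x hx.
have ->: H (H x) - x - pw (p + j.+1) =
   (H (H x) - H x - (H x - x)) + 2 * (H x - x - pw (p + j)).
  by rewrite addnS pwS; ring.
apply: rpredD.
  apply: dvdz_trans e1; rewrite addnS !pwS mulrA; apply: dvdz_mul; first by [].
  have ->: H x - x = (H x - x - pw (p + j)) + pw (p + j) by ring.
  apply: rpredD; last exact: dvdzz.
  apply: dvdz_trans e2; apply: pw_dvd; exact: leqnSn.
by rewrite addnS pwS; apply: dvdz_mul.
Qed.

Lemma core_period D c p m x : (2 <= p)%N -> (2 %| c)%Z -> EVH D c p -> (p <= m)%N ->
  cg p x c -> cg m (iter (2 ^ (m - p)) (F D) x) x.
Proof.
move=> hp hc hE hm hx; have [_ h] := core_main hp hc hE (m - p).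
have := h x hx; rewrite subnKC // => e.
rewrite /cg; have ->: iter (2 ^ (m - p)) (F D) x - x =
  (iter (2 ^ (m - p)) (F D) x - x - pw m) + pw m by ring.
apply: rpredD; last exact: dvdzz.
apply: dvdz_trans e; apply: pw_dvd; exact: leqnSn.
Qed.

Lemma core_trans D c p : (2 <= p)%N -> (2 %| c)%Z -> EVH D c p ->
  forall m, (p <= m)%N -> forall a b, cg p a c -> cg p b c ->
  exists k, cg m (iter k (F D) a) b.
Proof.
move=> hp hc hE; elim=> [|m IH] hm a b ha hb.
  by move: (leq_trans hp hm).
rewrite leq_eqVlt in hm; case/orP: hm => [/eqP <- | hm].
  exists 0%N => /=; exact: cg_trans ha (cg_sym hb).
have [k hk] := IH hm a b ha hb.
set z := iter k (F D) a in hk.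
have hz : cg p z c by exact: core_iter_in.
case/dvdzP: hk => s hs.
case: (par s) => hs2.
  by exists k; rewrite /cg hs pwS; apply: dvdz_mul.
have [_ hc2] := core_main hp hc hE (m - p).
have e := hc2 z hz; rewrite subnKC // in e.
exists (2 ^ (m - p) + k)%N; rewrite iterD -/z /cg.
have ->: iter (2 ^ (m - p)) (F D) z - b =
   (iter (2 ^ (m - p)) (F D) z - z - pw m) + (z - b - pw m) + pw m.+1.
  by rewrite pwS; ring.
rewrite hs; apply: rpredD; last exact: dvdzz.
apply: rpredD => //.
have ->: s * pw m - pw m = (s - 1) * pw m by ring.
rewrite pwS; apply: dvdz_mul => //; exact: dvdzz.
Qed.


Definition HYP (d : Z2) c n p :=
  forall x : int, cg n x c -> (pw p.+1 %| x * x - sval d p.+1 - pw p)%Z.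

Lemma sval_cg2 (x : Z2) p m m' : (p <= m)%N -> (p <= m')%N -> cg p (sval x m) (sval x m').
Proof. move=> h1 h2; apply: cg_trans (sval_cg x h1) (cg_sym (sval_cg x h2)). Qed.

Lemma EVH_of_HYP d c n p c' M : HYP d c n p -> (n <= p)%N -> cg n c' c -> (p < M)%N ->
  EVH (sval d M) c' p.
Proof.
move=> hH hn hc hM x hx.
have ->: x * x - sval d M - pw p = (x * x - sval d p.+1 - pw p) + (sval d p.+1 - sval d M) by ring.
apply: rpredD; first by apply: hH; apply: cg_trans (cg_le hn hx) hc.
exact: (sval_cg2 d (leqnn _) hM).
Qed.

Lemma fix_low d c n p x m : HYP d c n p -> cg n x c -> (m <= p)%N -> cg m (F (sval d m) x) x.
Proof.
move=> hH hx hm; rewrite /cg.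
have ->: F (sval d m) x - x = (x * x - sval d p.+1 - pw p) + pw p + (sval d p.+1 - sval d m)
  by rewrite /F; ring.
apply: rpredD; first apply: rpredD.
- apply: dvdz_trans (hH x hx); apply: pw_dvd; exact: leq_trans hm (leqnSn _).
- exact: pw_dvd.
- exact: (sval_cg d (leq_trans hm (leqnSn _))).
Qed.

Lemma fix_high d c n p x m : HYP d c n p -> cg n x c -> (p <= m)%N -> cg p (F (sval d m) x) x.
Proof.
move=> hH hx hm; rewrite /cg.
have ->: F (sval d m) x - x = (x * x - sval d p.+1 - pw p) + pw p + (sval d p.+1 - sval d m)
  by rewrite /F; ring.
apply: rpredD; first apply: rpredD.
- apply: dvdz_trans (hH x hx); apply: pw_dvd; exact: leqnSn.
- exact: dvdzz.
- exact: (sval_cg2 d (leqnSn _) hm).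
Qed.

Lemma ball_cg c p x : ball c p x <-> cg p (sval x p) c.
Proof. by rewrite /ball /res cg_modE. Qed.

Lemma ball_cg_high c p x m : ball c p x -> (p <= m)%N -> cg p (sval x m) c.
Proof. move/ball_cg=> h hm; exact: cg_trans (sval_cg x hm) h. Qed.

Lemma ball_open c p : openZ2 (ball c p).
Proof. by move=> x hx; exists p => y hy; rewrite /ball hy. Qed.
Lemma ball_closed c p : closedZ2 (ball c p).
Proof. by move=> x hx; exists p => y hy; rewrite /ball hy. Qed.

Lemma minc_of_HYP d c p : (2 <= p)%N -> (2 %| c)%Z -> HYP d c p p ->
  minimal_component d (ball c p).
Proof.
move=> hp hc hH; split.
- split; [exact: ball_open | exact: ball_closed].
- by exists (Z2const c).
- move=> x hx0; have hx := proj1 (ball_cg _ _ _) hx0; apply/ball_cg; rewrite /=.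
  exact: cg_trans (fix_high hH hx (leqnn p)) hx.
move=> x hx y hy m.
case: (leqP m p) => hm.
  exists 0%N => /=; apply/res_eqE.
  have hx' := proj1 (ball_cg _ _ _) hx; have hy' := proj1 (ball_cg _ _ _) hy.
  rewrite /=; apply: (cg_trans (cg_sym (sval_cg x hm))); apply: (cg_trans (cg_le hm hx')).
  exact: cg_trans (cg_sym (cg_le hm hy')) (sval_cg y hm).
have hE : EVH (sval d m) c p by apply: (EVH_of_HYP hH (leqnn p) (cg_refl _ _)).
have [k hk] := core_trans hp hc hE (ltnW hm) (ball_cg_high hx (ltnW hm)) (ball_cg_high hy (ltnW hm)).
by exists k; apply/res_eqE; rewrite sval_iter.
Qed.


Lemma fcycle_mem (T : eqType) (f : T -> T) t y : fcycle f t -> y \in t -> f y \in t.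
Proof. by move=> hc hy; rewrite -(nextE hc hy) mem_next. Qed.

Lemma fcycle_iter_mem (T : eqType) (f : T -> T) t y k : fcycle f t -> y \in t -> iter k f y \in t.
Proof. move=> hc hy; elim: k => //= k IH; exact: fcycle_mem. Qed.

Lemma fcycle_fixed (T : eqType) (f : T -> T) x s :
  (forall y, y \in x :: s -> f y = y) -> uniq (x :: s) -> fcycle f (x :: s) -> s = [::].
Proof.
case: s => // z s hf hu /= /andP [/eqP hz _].
rewrite -hz hf ?mem_head // in hu. by rewrite /= mem_head in hu.
Qed.

Lemma iter_period (T : Type) (f : T -> T) L x k : iter L f x = x -> iter k f x = iter (k %% L) f x.
Proof.
move=> hL; rewrite {1}(divn_eq k L) addnC iterD; congr (iter _ f _).
elim: (k %/ L)%N => //= q IH; by rewrite mulSn iterD IH.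
Qed.

Lemma fcycle_traject (T : eqType) (f : T -> T) x L : (0 < L)%N -> iter L f x = x ->
  fcycle f (traject f x L).
Proof.
case: L => // L _ hL; rewrite [traject _ _ _]/= /cycle.
have ->: rcons (traject f (f x) L) x = traject f (f x) L.+1.
  by rewrite trajectSr -iterSr hL.
exact: fpath_traject.
Qed.

Lemma cg_range_eq m a b : cg m a b -> 0 <= a < pw m -> 0 <= b < pw m -> a = b.
Proof. by move/cg_modE => h ha hb; rewrite -(mod_small_pw ha) -(mod_small_pw hb). Qed.

Definition Senum p M (r0 : int) := [seq r0 + pw p * (Posz i) | i <- iota 0 (2 ^ (M - p))].

Lemma Senum_uniq p M r0 : uniq (Senum p M r0).
Proof.
rewrite /Senum map_inj_uniq ?iota_uniq // => i j /addrI /(mulfI (pw_neq0 p)).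
by case.
Qed.

Lemma Senum_size p M r0 : size (Senum p M r0) = (2 ^ (M - p))%N.
Proof. by rewrite size_map size_iota. Qed.

Lemma pw_split p M : (p <= M)%N -> pw M = pw p * Posz (2 ^ (M - p)).
Proof. by move=> h; rewrite -{1}(subnKC h) pwD. Qed.

Lemma Senum_mem p M r0 z : (p <= M)%N -> 0 <= r0 < pw p ->
  (z \in Senum p M r0) <-> (0 <= z < pw M /\ (z %% pw p)%Z = r0).
Proof.
move=> hM hr; rewrite (pw_split hM); set K := (2 ^ (M - p))%N.
have hp := pw_gt0 p; set P := pw p in hr hp *.
split.
  case/mapP => i; rewrite mem_iota add0n => hi ->.
  have hi' : Posz i < Posz K by rewrite ltz_nat.
  split.
    have: Posz i + 1 <= Posz K by lia.
    move=> h2; apply/andP; split; first by nia.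
    have: P * (Posz i + 1) <= P * Posz K by rewrite ler_pM2l.
    nia.
  rewrite addrC mulrC modzMDl. exact: mod_small_pw.
case=> /andP [h0 h1] hz.
have hq := divz_eq z P; set q := (z %/ P)%Z in hq.
have q0 : 0 <= q by nia.
have qK : q < Posz K by nia.
apply/mapP; exists `|q|%N.
  rewrite mem_iota add0n; rewrite -ltz_nat gez0_abs //.
rewrite gez0_abs // {1}hq hz; ring.
Qed.


Lemma fn_fixed d c n p m y : HYP d c n p -> cg n y c -> (m <= p)%N -> 0 <= y < pw m ->
  fn d m y = y.
Proof.
move=> hH hy hm hr; rewrite fnE; apply: cg_range_eq (mod_range _ _) hr.
exact: cg_trans (cg_mod _ _) (fix_low hH hy hm).
Qed.

Lemma above_cg n c t y : above n [:: (c %% pw n)%Z] t -> y \in t -> cg n y c.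
Proof.
move=> /allP h /h; rewrite inE => /eqP e; apply/cg_modE; by rewrite e.
Qed.

Lemma range_S m y : 0 <= y < pw m -> 0 <= y < pw m.+1.
Proof. move=> /andP [h1 h2]; rewrite h1 /= pwS; have := pw_gt0 m; lia. Qed.

Lemma cycle1 d m z : 0 <= z < pw m -> fn d m z = z -> cycle_at d m [:: z].
Proof. by move=> hr hf; rewrite /cycle_at /= hr /= hf eqxx. Qed.

Lemma typeI_split d c n p m t : HYP d c n p -> (n <= m)%N -> (m < p)%N ->
  cycle_at d m t -> above n [:: (c %% pw n)%Z] t -> splits d m t.
Proof.
move=> hH hnm hmp /and4P [hne hu hra hcy] hab.
case: t hne hu hra hcy hab => // y s _ hu hra hcy hab.
have hall z : z \in y :: s -> fn d m z = z.
  move=> hz; apply: (fn_fixed hH (above_cg hab hz) (ltnW hmp)).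
  by move/allP: hra => /(_ z hz).
have es := fcycle_fixed hall hu hcy; subst s.
have hyr : 0 <= y < pw m by move: hra => /= /andP [].
have hyc : cg n y c := above_cg hab (mem_head _ _).
have hy2 : 0 <= y + pw m < pw m.+1 by rewrite pwS; have := pw_gt0 m; lia.
have hyc2 : cg n (y + pw m) c.
  rewrite /cg; have ->: y + pw m - c = (y - c) + pw m by ring.
  apply: rpredD => //; exact: pw_dvd.
exists [:: y], [:: y + pw m]; split.
- split; apply: cycle1.
  + exact: range_S.
  + exact: (fn_fixed hH hyc hmp (range_S hyr)).
  + exact: hy2.
  + exact: (fn_fixed hH hyc2 hmp hy2).
- by [].
- move=> z; rewrite !inE => /eqP ->; apply/eqP => h.
  by have := pw_gt0 m; lia.
move=> z; split.
  case; rewrite inE => /eqP ->.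
    split; first exact: range_S.
    by rewrite inE mod_small_pw.
  split; first exact: hy2.
  by rewrite inE modzDr mod_small_pw.
rewrite /Xlift inE => -[hz /eqP hzm].
case: (ltP z (pw m)) => hlt.
  left; rewrite inE -hzm mod_small_pw //; by move: hz => /andP [-> _].
right; rewrite inE; apply/eqP.
have h1 : 0 <= z - pw m < pw m by move: hz; rewrite pwS; lia.
have : ((z - pw m) %% pw m)%Z = y by rewrite -hzm -[in RHS](subrK (pw m) z) modzDr.
rewrite mod_small_pw // => <-; ring.
Qed.

Lemma fpath_inv (T : eqType) (f : T -> T) (P : T -> Prop) x s :
  P x -> (forall y, P y -> P (f y)) -> fpath f x s -> forall y, y \in s -> P y.
Proof.
move=> hx hf; elim: s x hx => // z s IH x hx /= /andP [/eqP hz hp] y.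
rewrite inE => /orP [/eqP -> | hy]; first by rewrite -hz; exact: hf.
apply: (IH z) => //; rewrite -hz; exact: hf.
Qed.

Lemma even_cg n y c : (1 <= n)%N -> (2 %| c)%Z -> cg n y c -> (2 %| y)%Z.
Proof.
move=> hn hc h; have ->: y = (y - c) + c by ring.
apply: rpredD => //; apply: dvdz_trans h; exact: (@pw_dvd 1 n).
Qed.

Lemma typeI_grow d c n p m t : HYP d c n p -> (2 <= n)%N -> (n <= p)%N -> (2 %| c)%Z ->
  (p <= m)%N -> cycle_at d m t -> above n [:: (c %% pw n)%Z] t -> grows d m t.
Proof.
move=> hH hn hnp hc hpm /and4P [hne hu hra hcy] hab.
case: t hne hu hra hcy hab => // t0 s _ hu hra hcy hab.
set t := t0 :: s in hu hra hcy hab *.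
have hp : (2 <= p)%N by exact: leq_trans hn hnp.
have ht0 : cg n t0 c := above_cg hab (mem_head _ _).
have ht0e : (2 %| t0)%Z := even_cg (ltnW hn) hc ht0.
set D := sval d m.+1.
have hE : EVH D t0 p := EVH_of_HYP hH hnp ht0 (leq_ltn_trans hpm (ltnSn m)).
have hrng : forall y, y \in t -> 0 <= y < pw m by move=> y hy; move/allP: hra => /(_ y hy).
have Pcg : forall y, cg p y t0 -> cg n y c by move=> y hy; exact: cg_trans (cg_le hnp hy) ht0.
have Pfn M y : (p <= M)%N -> cg p y t0 -> cg p (fn d M y) t0.
  move=> hM hy; rewrite fnE; apply: cg_trans (cg_le hM (cg_mod _ _)) _.
  exact: cg_trans (fix_high hH (Pcg y hy) hM) hy.
have Piter M y k : (p <= M)%N -> cg p y t0 -> cg p (iter k (fn d M) y) t0.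
  by move=> hM hy; elim: k => //= k IH; apply: Pfn.
have memt : forall y, y \in t -> cg p y t0.
  move=> y; rewrite inE => /orP [/eqP -> | hy]; first exact: cg_refl.
  apply: (fpath_inv (P := fun y => cg p y t0) (cg_refl _ _) _ hcy).
    by move=> z hz; exact: Pfn.
  by rewrite mem_rcons inE hy orbT.
have ht0r : 0 <= t0 < pw m := hrng t0 (mem_head _ _).
have hdm : cg m (sval d m) D := cg_sym (sval_cg d (leqnSn m)).
have memt2 : forall y, 0 <= y < pw m -> cg p y t0 -> y \in t.
  move=> y hyr hy.
  have [k hk] := core_trans hp ht0e hE hpm (cg_refl _ _) hy.
  have e : iter k (fn d m) t0 = y.
    apply: cg_range_eq hyr; last exact: iter_fn_range.
    apply: cg_trans (iter_fn _ _ _ _) _; apply: cg_trans hk.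
    apply: iterF_cg => //; exact: cg_refl.
  by rewrite -e; apply: fcycle_iter_mem hcy (mem_head _ _).
set r0 := (t0 %% pw p)%Z.
have hr0 : 0 <= r0 < pw p by exact: mod_range.
have memS M y : (p <= M)%N -> (y \in Senum p M r0) <-> (0 <= y < pw M /\ cg p y t0).
  move=> hM; rewrite Senum_mem //; split => -[h1 h2]; split => //; exact/cg_modE.
have sz : size t = (2 ^ (m - p))%N.
  rewrite -(Senum_size p m r0); apply: perm_size; apply: uniq_perm hu (Senum_uniq _ _ _) _.
  move=> y; apply/idP/idP.
    by move=> hy; apply/(memS m y hpm); split; [exact: hrng | exact: memt].
  by move/(memS m y hpm) => [h1 h2]; exact: memt2.
have hpm1 : (p <= m.+1)%N := leq_trans hpm (leqnSn m).
set L := (2 ^ (m.+1 - p))%N.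
have hL : (0 < L)%N by rewrite expn_gt0.
set f := fn d m.+1.
have ht0r1 := range_S ht0r.
have hper : iter L f t0 = t0.
  apply: (@cg_range_eq m.+1); [|exact: iter_fn_range|exact: ht0r1].
  apply: cg_trans (iter_fn _ _ _ _) _; exact: core_period hp ht0e hE hpm1 (cg_refl _ _).
set t' := traject f t0 L.
have mt'1 : forall y, y \in t' -> 0 <= y < pw m.+1 /\ cg p y t0.
  move=> y /trajectP [i _ ->]; split; first exact: iter_fn_range.
  exact: Piter hpm1 (cg_refl _ _).
have mt'2 : forall y, 0 <= y < pw m.+1 -> cg p y t0 -> y \in t'.
  move=> y hyr hy.
  have [k hk] := core_trans hp ht0e hE hpm1 (cg_refl _ _) hy.
  have e : iter k f t0 = y.
    apply: cg_range_eq hyr; last exact: iter_fn_range.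
    exact: cg_trans (iter_fn _ _ _ _) hk.
  apply/trajectP; exists (k %% L)%N; first by rewrite ltn_mod.
  by rewrite -e (iter_period _ hper).
have hu' : uniq t'.
  apply: (leq_size_uniq (Senum_uniq p m.+1 r0)).
    by move=> y /(memS _ y hpm1) [h1 h2]; exact: mt'2.
  by rewrite size_traject Senum_size.
exists t'; split.
- apply/and4P; split.
  + by rewrite -size_eq0 size_traject -lt0n.
  + exact: hu'.
  + by apply/allP => y /mt'1 [].
  + exact: fcycle_traject.
- by rewrite size_traject sz /L subSn // expnS.
move=> y; split.
  move/mt'1 => [h1 h2]; split => //.
  apply: memt2; first exact: mod_range.
  exact: cg_trans (cg_le hpm (cg_mod _ _)) h2.
rewrite /Xlift => -[h1 h2]; apply: mt'2 => //.
have := memt _ h2; apply: cg_trans; apply: cg_sym; exact: cg_le hpm (cg_mod _ _).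
Qed.

Lemma typeI_of_HYP d n c p : (2 <= n)%N -> (n <= p)%N -> (2 %| c)%Z -> HYP d c n p ->
  typeI d n c (p - n).
Proof.
move=> hn hnp hc hH; rewrite /typeI; split.
  apply: fn_fixed hH _ hnp (mod_range _ _); exact: cg_mod.
split=> m t; rewrite subnKC //.
  move=> /andP [h1 h2] hcy hab; exact: typeI_split hH h1 h2 hcy hab.
move=> h1 hcy hab; exact: typeI_grow hH hn hnp hc h1 hcy hab.
Qed.


Lemma HYP_sub d c n p c' n' : HYP d c n p -> cg n c' c -> (n <= n')%N -> HYP d c' n' p.
Proof. move=> hH hc hn x hx; apply: hH; exact: cg_trans (cg_le hn hx) hc. Qed.

Lemma sq_pow n x : (1 <= n)%N -> cg n x (pw n.-1) -> cg (2 * n).+1 (x * x) (pw (2 * n - 2)).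
Proof.
case: n => // k _; rewrite /cg /= => /dvdzP [q hq].
have ex : x = pw k * (1 + 2 * q) by rewrite pwS in hq; rewrite -[x](subrK (pw k)) hq; ring.
have e2 : (2 * k.+1 - 2 = k + k)%N by lia.
have e3 : ((2 * k.+1).+1 = (k + k) + 3)%N by lia.
rewrite e2 e3 /cg ex.
have ->: pw (k + k + 3) = (pw k * pw k) * pw 3 by rewrite !pwD.
have ->: pw (k + k) = pw k * pw k by rewrite pwD.
have ->: pw k * (1 + 2 * q) * (pw k * (1 + 2 * q)) - pw k * pw k =
   (pw k * pw k) * (4 * (q * (q + 1))) by ring.
apply: dvdz_mul; first exact: dvdzz.
have -> : pw 3 = 4 * 2 by [].
apply: dvdz_mul; first exact: dvdzz.
case: (par q) => h.
  exact: dvdz_mulr.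
have ->: q + 1 = (q - 1) + 2 by ring.
apply: dvdz_mull; apply: rpredD => //; exact: dvdzz.
Qed.

Lemma HYP_pow d n p : (1 <= n)%N -> (p.+1 <= (2 * n).+1)%N ->
  (pw p.+1 %| pw (2 * n - 2) - sval d p.+1 - pw p)%Z -> HYP d (pw n.-1) n p.
Proof.
move=> hn hp h x hx.
have ->: x * x - sval d p.+1 - pw p =
   (x * x - pw (2 * n - 2)) + (pw (2 * n - 2) - sval d p.+1 - pw p) by ring.
apply: rpredD => //; apply: dvdz_trans (sq_pow hn hx); exact: pw_dvd.
Qed.

Lemma HYP_zero d n p : (p.+1 <= 2 * n)%N ->
  (pw p.+1 %| - sval d p.+1 - pw p)%Z -> HYP d 0 n p.
Proof.
move=> hp h x /dvdzP [q hq]; rewrite subr0 in hq.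
have ->: x * x - sval d p.+1 - pw p = (q * q) * (pw n * pw n) + (- sval d p.+1 - pw p)
  by rewrite hq; ring.
apply: rpredD => //; apply: dvdz_mull; rewrite -pwD; apply: pw_dvd; lia.
Qed.

Lemma res0E (z : Z2) m : res z m = 0 <-> (pw m %| sval z m)%Z.
Proof. by rewrite /res; split => [h|]; [apply/dvdz_mod0P | move/dvdz_mod0P]. Qed.

Lemma res0_low (z : Z2) m w : res z w = 0 -> (m <= w)%N -> (pw m %| sval z m)%Z.
Proof.
move/res0E => h hm; have := sval_cg z hm; rewrite /cg => h2.
have ->: sval z m = sval z w - (sval z w - sval z m) by ring.
apply: rpredB => //; exact: dvdz_trans (pw_dvd hm) h.
Qed.

Lemma val2_exact (z : Z2) w : val2 z w -> (pw w.+1 %| sval z w.+1 - pw w)%Z.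
Proof.
case=> h0 h1.
have := res0_low h0 (leqnn _) => hw.
have := sval_cg z (leqnSn w); rewrite /cg => h2.
have : (pw w %| sval z w.+1)%Z.
  have ->: sval z w.+1 = (sval z w.+1 - sval z w) + sval z w by ring.
  exact: rpredD.
case/dvdzP => s hs.
case: (par s) => hs2.
  by exfalso; apply: h1; apply/res0E; rewrite hs pwS; apply: dvdz_mul.
have ->: sval z w.+1 - pw w = (s - 1) * pw w by rewrite hs; ring.
by rewrite pwS; apply: dvdz_mul.
Qed.


Fixpoint hs (d : Z2) (a : int) (j : nat) (m : nat) : int :=
  match m with
  | 0 => a
  | m'.+1 => let s := hs d a j m' in
      if (pw (m' + 2 * j + 3)%N.+1 %| s * s - sval d (m' + 2 * j + 3)%N.+1)%Z then s
      else s + pw (m' + j + 2)%N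
  end.

Lemma hs_inv d a j b : a = pw j * b -> (2 %| b - 1)%Z ->
  (pw (2 * j + 3)%N %| a * a - sval d (2 * j + 3)%N)%Z -> forall m,
  (exists u, hs d a j m = pw j * u /\ (2 %| u - 1)%Z) /\
  (pw (m + 2 * j + 3)%N %| hs d a j m * hs d a j m - sval d (m + 2 * j + 3)%N)%Z.
Proof.
move=> ha hb hsq; elim=> [|m [[u [hu hu1]] IH]].
  by split; [exists b | rewrite add0n].
rewrite /=; set s := hs d a j m in hu IH *.
set K := (m + 2 * j + 3)%N in IH *.
have eK : (m.+1 + 2 * j + 3 = K.+1)%N by rewrite /K; lia.
rewrite eK.
case: ifP => htest.
  by split => //; exists u.
split.
  exists (u + pw (m + 2)%N); split.
    by rewrite hu mulrDr -pwD; congr (_ + pw _); lia.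
  have ->: u + pw (m + 2)%N - 1 = (u - 1) + pw (m + 2)%N by ring.
  apply: rpredD => //; apply: (@pw_dvd 1 (m + 2)%N); lia.
have hK : (pw K %| s * s - sval d K.+1)%Z.
  have ->: s * s - sval d K.+1 = (s * s - sval d K) + (sval d K - sval d K.+1) by ring.
  apply: rpredD => //; exact: cg_sym (sval_cg d (leqnSn K)).
case/dvdzP: hK => e he.
have he2 : (2 %| e - 1)%Z.
  case: (par e) => // h; exfalso; move/negP: htest; apply.
  by rewrite he pwS; apply: dvdz_mul.
have p1 : 2 * s * pw (m + j + 2)%N = pw K * u.
  rewrite hu; have ->: 2 * (pw j * u) * pw (m + j + 2)%N = (2 * pw j * pw (m + j + 2)%N) * u by ring.
  rewrite -pwS -pwD; congr (pw _ * _); rewrite /K; lia.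
have p2 : pw (m + j + 2)%N * pw (m + j + 2)%N = pw K.+1 * pw m.
  by rewrite -!pwD; congr pw; rewrite /K; lia.
have ->: (s + pw (m + j + 2)%N) * (s + pw (m + j + 2)%N) - sval d K.+1 =
  (s * s - sval d K.+1) + 2 * s * pw (m + j + 2)%N + pw (m + j + 2)%N * pw (m + j + 2)%N by ring.
rewrite he p1 p2; apply: rpredD; last exact: dvdz_mulr.
have ->: e * pw K + pw K * u = ((e - 1) + (u - 1) + 2) * pw K by ring.
rewrite pwS; apply: dvdz_mul; last exact: dvdzz.
by apply: rpredD; [apply: rpredD|].
Qed.

Lemma hensel (d : Z2) (a : int) (j : nat) (b : int) : a = pw j * b -> (2 %| b - 1)%Z ->
  (pw (2 * j + 3)%N %| a * a - sval d (2 * j + 3)%N)%Z -> exists y : Z2, eqZ2 (Z2mul y y) d.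
Proof.
move=> ha hb hsq; have hI := hs_inv ha hb hsq.
have hc : compat (hs d a j).
  move=> n; apply/cg_modE; rewrite /=.
  case: ifP => _; first exact: cg_refl.
  rewrite /cg; have ->: hs d a j n + pw (n + j + 2)%N - hs d a j n = pw (n + j + 2)%N by ring.
  apply: pw_dvd; lia.
exists (exist _ _ hc) => n; rewrite /res /=; apply/cg_modE.
have [_ h] := hI n.
have hn : (n <= n + 2 * j + 3)%N by lia.
apply: cg_trans (cg_le hn h) _; exact: (sval_cg d hn).
Qed.


Lemma DU_of_idx (S : Z2 -> Prop) (Es : seq (Z2 -> Prop)) (idx : Z2 -> nat) :
  (forall x, S x -> (idx x < size Es)%N) ->
  (forall x i, (i < size Es)%N -> (nth emptyZ2 Es i x <-> S x /\ idx x = i)) ->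
  disjoint_union S Es.
Proof.
move=> hs hn; split.
  move=> x; split.
    by move=> hx; exists (idx x); [exact: hs | apply/hn; [exact: hs|]].
  by case=> i hi /(hn x i hi) [].
move=> i j x /andP [hij hj] [hi' hj'].
have hi : (i < size Es)%N by exact: ltn_trans hij hj.
case/(hn x i hi): hi' => _ e1; case/(hn x j hj): hj' => _ e2.
by move: hij; rewrite -e1 -e2 ltnn.
Qed.

Definition gfind (x : Z2) N := find (fun k => res x k.+1 != 0) (iota 0 N).

Lemma gf_le x N : (gfind x N <= N)%N.
Proof. by rewrite /gfind; have := find_size (fun k => res x k.+1 != 0) (iota 0 N); rewrite size_iota. Qed.

Lemma gf_before x N k : (k < gfind x N)%N -> res x k.+1 = 0.
Proof.
move=> h; have := before_find 0%N h; rewrite nth_iota ?add0n.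
  by move/negbFE/eqP.
exact: leq_trans h (gf_le x N).
Qed.

Lemma gf_at x N : (gfind x N < N)%N -> res x (gfind x N).+1 != 0.
Proof.
move=> h; have hh : has (fun k => res x k.+1 != 0) (iota 0 N) by rewrite has_find size_iota.
by have := nth_find 0%N hh; rewrite -/(gfind x N) nth_iota // add0n.
Qed.

Lemma res_range (x : Z2) k : 0 <= res x k < pw k.
Proof. exact: mod_range. Qed.

Lemma res_key (x : Z2) k : res x k = 0 -> res x k.+1 != 0 -> res x k.+1 = pw k.
Proof.
move=> h0 /eqP h1; rewrite (res_low x (leqnSn k)) in h0.
have hr := res_range x k.+1; rewrite pwS in hr.
have hq := divz_eq (res x k.+1) (pw k); rewrite h0 addr0 in hq.
have hp := pw_gt0 k.
set q := ((res x k.+1) %/ pw k)%Z in hq.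
rewrite hq in h1 hr *. have : q = 1 by nia. by move=> ->; rewrite mul1r.
Qed.

Lemma ball_pwE n x : (1 <= n)%N -> ball (pw n.-1) n x <-> res x n = pw n.-1.
Proof.
case: n => // n _; rewrite /ball /= mod_small_pw //.
by rewrite pwS; have := pw_gt0 n; lia.
Qed.

Lemma pw_mod0 k n : (k <= n)%N -> (pw n %% pw k)%Z = 0.
Proof. by move=> h; apply/dvdz_mod0P; exact: pw_dvd. Qed.

Lemma ballP_pow N n x : (2 <= n)%N -> (n <= N)%N ->
  (ball (pw n.-1) n x <-> res x 1 = 0 /\ gfind x N = n.-1).
Proof.
case: n => [|[|k]] // _ hN; rewrite ball_pwE // /=.
split.
  move=> hx.
  have low j : (j <= k.+1)%N -> res x j = 0.
    move=> hj; rewrite (res_low x (leq_trans hj (leqnSn _))) hx pw_mod0 //.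
  split; first exact: low.
  case: (ltngtP (gfind x N) k.+1) => // hg.
    have hlt : (gfind x N < N)%N by apply: leq_trans hg _; apply: ltnW.
    by have := gf_at hlt; rewrite low ?eqxx.
  have := gf_before hg; rewrite hx => h.
  by have := pw_neq0 k.+1; rewrite h eqxx.
case=> h1 hg.
have hlt : (gfind x N < N)%N by rewrite hg.
have := gf_at hlt; rewrite hg => hne.
apply: res_key hne.
by apply: (@gf_before x N); rewrite hg.
Qed.

Lemma ballP_zero N x : (1 <= N)%N -> (ball 0 N x <-> res x 1 = 0 /\ gfind x N = N).
Proof.
case: N => // N _; rewrite /ball mod0z; split.
  move=> hx; split; first by rewrite (res_low x (isT : (1 <= N.+1)%N)) hx mod0z.
  case: (ltngtP (gfind x N.+1) N.+1) => // hg; last by have := gf_le x N.+1; rewrite leqNgt hg.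
  have := gf_at hg; rewrite (res_low x hg) hx mod0z; by rewrite eqxx.
case=> _ hg; apply: (@gf_before x N.+1); rewrite hg; exact: ltnSn.
Qed.

Lemma gf_pos N x : (1 <= N)%N -> res x 1 = 0 -> (1 <= gfind x N)%N.
Proof.
move=> hN h1; rewrite lt0n; apply/eqP => hg.
have := @gf_at x N; rewrite hg h1 eqxx; by move/(_ hN).
Qed.

Lemma ball01 x : ball 0 1 x <-> res x 1 = 0.
Proof. by rewrite /ball mod0z. Qed.

Lemma DU3 N : (1 <= N)%N ->
  disjoint_union (ball 0 1) ([seq ball (pw n.-1) n | n <- iota 2 N.-1] ++ [:: ball 0 N]).
Proof.
move=> hN; apply: (@DU_of_idx _ _ (fun x => (gfind x N).-1)).
  move=> x /ball01 h1; rewrite size_cat size_map size_iota /=.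
  have := gf_le x N; have := gf_pos hN h1; lia.
move=> x i; rewrite size_cat size_map size_iota /= nth_cat size_map size_iota => hi.
case: ifP => hi2.
  rewrite (nth_map 0%N) ?size_iota // nth_iota //.
  rewrite (ballP_pow (N := N)); [|lia|lia].
  rewrite ball01; split => -[h1 h2]; split => //.
    by rewrite h2.
  by have := gf_pos hN h1; lia.
have -> : (i - N.-1 = 0)%N by lia.
rewrite /= (ballP_zero _ hN) ball01; split => -[h1 h2]; split => //.
  by rewrite h2; lia.
by have := gf_pos hN h1; have := gf_le x N; lia.
Qed.

Lemma DU4 N : (3 <= N)%N ->
  disjoint_union (ball 0 1)
    ([seq ball (pw n.-1) n | n <- iota 2 (N - 2)] ++ [:: ball 0 N; ball (pw N.-1) N]).
Proof.
move=> hN.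
apply: (@DU_of_idx _ _ (fun x => if gfind x N == N then (N - 2)%N
   else if gfind x N == N.-1 then N.-1 else (gfind x N).-1)).
  move=> x /ball01 h1; rewrite size_cat size_map size_iota /=.
  have := gf_le x N; have := gf_pos (ltnW (ltnW hN)) h1.
  case: eqP => ?; first lia. case: eqP => ?; lia.
move=> x i; rewrite size_cat size_map size_iota /= nth_cat size_map size_iota => hi.
have hN1 : (1 <= N)%N by lia.
case: ifP => hi2.
  rewrite (nth_map 0%N) ?size_iota // nth_iota //.
  rewrite (ballP_pow (N := N)); [|lia|lia].
  rewrite ball01; split => -[h1 h2]; split => //.
    rewrite h2 /=; case: eqP => ?; first lia. case: eqP => ?; lia.
  move: h2; have := gf_pos hN1 h1; have := gf_le x N.
  case: eqP => ?; first lia. case: eqP => ?; lia.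
case e: (i - (N - 2))%N => [|[|k]].
- rewrite /= (ballP_zero _ hN1) ball01; split => -[h1 h2]; split => //.
    by rewrite h2 eqxx; move/negbT: hi2; lia.
  move: h2; have := gf_pos hN1 h1; have := gf_le x N.
  case: eqP => ?; first lia. case: eqP => ?; lia.
- rewrite /= (ballP_pow (N := N)); [|lia|lia].
  rewrite ball01; split => -[h1 h2]; split => //.
    rewrite h2; case: eqP => ?; first lia. case: eqP => ?; lia.
  move: h2; have := gf_pos hN1 h1; have := gf_le x N.
  case: eqP => ?; first lia. case: eqP => ?; lia.
- lia.
Qed.


Definition nonsq (d : Z2) := ~ (exists y : Z2, eqZ2 (Z2mul y y) d).

Lemma ex_val d : nonsq d -> exists v, val2 d v.
Proof.
move=> hns.
have [ex|nex] := classic (exists n, res d n != 0).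
  case: (ex_minnP ex) => m hm hmin.
  case: m hm hmin => [|v] hm hmin.
    by rewrite /res pw0 modz1 eqxx in hm.
  exists v; split; last exact/eqP.
  by case: (boolP (res d v != 0)) => [hh|/negPn/eqP //]; have := hmin v hh; rewrite ltnn.
exfalso; apply: hns; exists (Z2const 0) => n.
rewrite /res /= mulr0 mod0z.
case: (boolP (res d n != 0)) => [h|/negPn/eqP h]; first by exfalso; apply: nex; exists n.
by move: h; rewrite /res.
Qed.

Lemma val_decomp_aux n (a : int) : (absz a <= n)%N -> a != 0 ->
  exists j b, a = pw j * b /\ (2 %| b - 1)%Z.
Proof.
elim: n a => [|n IH] a ha hne.
  by move: hne; have -> : a = 0 by lia.
case: (par a) => h.
  case/dvdzP: h => q hq.
  have hq0 : q != 0 by apply: contraNneq hne => e; rewrite hq e mul0r.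
  have : (absz q <= n)%N by rewrite hq in ha; lia.
  move=> /(IH q)/(_ hq0) [j [b [e1 e2]]].
  by exists j.+1, b; rewrite hq e1 pwS; split => //; ring.
by exists 0%N, a; rewrite pw0 mul1r.
Qed.

Lemma val_decomp (a : int) : a != 0 -> exists j b, a = pw j * b /\ (2 %| b - 1)%Z.
Proof. exact: (@val_decomp_aux (absz a)). Qed.

Lemma not2_1 : ~ (2 %| (1 : int))%Z.
Proof. by []. Qed.

Lemma odd_sq (b : int) : (2 %| b - 1)%Z -> ~ (2 %| b * b)%Z.
Proof.
move=> hb h; apply: not2_1.
have e : b * b - (b - 1) * (b + 1) = 1 by ring.
have : (2 %| b * b - (b - 1) * (b + 1))%Z by apply: rpredB => //; apply: dvdz_mulr.
by rewrite e.
Qed.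

Lemma val2_not (d : Z2) v m : val2 d v -> (v < m)%N -> ~ (pw v.+1 %| sval d m)%Z.
Proof.
case=> _ h1 hm h; apply: h1; apply/res0E.
have := sval_cg d hm; rewrite /cg => h2.
have ->: sval d v.+1 = sval d m - (sval d m - sval d v.+1) by ring.
apply: rpredB => //; exact: dvdz_trans (pw_dvd hm) h2.
Qed.

Lemma bound d v : nonsq d -> val2 d v ->
  forall a : int, ~ (pw (v + 3) %| a * a - sval d (v + 3)%N)%Z.
Proof.
move=> hns hv a h.
have hv0 := hv; case: hv0 => h0 _.
have hlt : (v < v + 3)%N by lia.
have hnot := val2_not hv hlt.
have hle1 : (v.+1 <= v + 3)%N by lia.
have ha : a != 0.
  apply/eqP => ea; apply: hnot; rewrite ea mul0r sub0r rpredN in h.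
  exact: dvdz_trans (pw_dvd hle1) h.
case: (val_decomp ha) => j [b [ea hb]].
have eaa : a * a = pw (j + j) * (b * b) by rewrite ea pwD; ring.
move: h; case: (ltngtP (j + j) v) => hjv h.
-
  have hd : (pw (j + j).+1 %| sval d (v + 3)%N)%Z.
    have h1 := res0_low h0 hjv.
    have := sval_cg d (leq_trans hjv (ltnW hlt)); rewrite /cg => h2.
    have ->: sval d (v + 3)%N = (sval d (v + 3)%N - sval d (j + j)%N.+1) + sval d (j + j)%N.+1 by ring.
    exact: rpredD.
  have : (pw (j + j).+1 %| a * a)%Z.
    have ->: a * a = (a * a - sval d (v + 3)%N) + sval d (v + 3)%N by ring.
    apply: rpredD => //; apply: dvdz_trans h; apply: pw_dvd; lia.
  rewrite eaa pwS [2 * _]mulrC dvdz_mul2l ?pw_neq0 //; exact: odd_sq.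
-
  apply: hnot.
  have h1 : (pw v.+1 %| a * a)%Z by rewrite eaa; apply: dvdz_mulr; exact: pw_dvd.
  have ->: sval d (v + 3)%N = a * a - (a * a - sval d (v + 3)%N) by ring.
  apply: rpredB => //; exact: dvdz_trans (pw_dvd hle1) h.
-
  apply: hns; apply: (hensel ea hb).
  have e : (2 * j + 3 = v + 3)%N by lia.
  by rewrite e.
Qed.


Definition Qp (d : Z2) (cp : int * nat) : bool :=
  [&& (2 %| cp.1)%Z, (2 <= cp.2)%N &
      (pw cp.2.+1 %| cp.1 * cp.1 - sval d cp.2.+1 - pw cp.2)%Z].

Lemma Qp_HYP d cp : Qp d cp -> HYP d cp.1 cp.2 cp.2.
Proof.
case: cp => c p /and3P [/= hc hp hq] x hx.
have ->: x * x - sval d p.+1 - pw p = (x - c) * (x + c) + (c * c - sval d p.+1 - pw p) by ring.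
apply: rpredD => //; rewrite pwS mulrC; apply: dvdz_mul => //.
have ->: x + c = (x - c) + 2 * c by ring.
apply: rpredD; last exact: dvdz_mulr.
apply: dvdz_trans hx; apply: (@pw_dvd 1 p); lia.
Qed.

Lemma not_pw_dvd p : ~ (pw p.+1 %| pw p)%Z.
Proof.
move=> h; apply: not2_1.
have : (pw p * 2 %| pw p * 1)%Z by rewrite mulr1 mulrC -pwS.
by rewrite dvdz_mul2l ?pw_neq0.
Qed.

Definition pairs N : seq (int * nat) :=
  undup [seq (Posz i, p) | p <- iota 0 N, i <- iota 0 (2 ^ p)].

Lemma pairs_mem N cp : cp \in pairs N -> (cp.2 < N)%N /\ 0 <= cp.1 < pw cp.2.
Proof.
rewrite mem_undup => /allpairsPdep [p [i [hp hi ->]]] /=.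
move: hp hi; rewrite !mem_iota !add0n => hp hi; split => //.
Qed.

Lemma pairs_in N c p : (p < N)%N -> 0 <= c < pw p -> (c, p) \in pairs N.
Proof.
move=> hp /andP [h0 h1]; rewrite mem_undup; apply/allpairsPdep.
exists p, (absz c); rewrite !mem_iota !add0n hp gez0_abs //; split => //.
by move: h1; rewrite /pw -{1}(gez0_abs h0) ltz_nat.
Qed.

Lemma exist_decomp d : res d 2 = 0 -> nonsq d -> exists Es, min_decomp d (ball 0 1) Es.
Proof.
move=> hd2 hns.
have [v hv] := ex_val hns.
have hb := bound hns hv.
set N := (v + 3)%N.
set L := filter (Qp d) (pairs N).
have hLu : uniq L by rewrite filter_uniq // undup_uniq.
have memL cp : cp \in L -> [/\ Qp d cp, (cp.2 < N)%N & 0 <= cp.1 < pw cp.2].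
  rewrite mem_filter => /andP [hq /pairs_mem [h1 h2]]; by split.
have ballE cp x : cp \in L -> (ball cp.1 cp.2 x <-> res x cp.2 = cp.1).
  by case/memL => _ _ hr; rewrite /ball mod_small_pw.
have levP cp x : cp \in L -> res x cp.2 = cp.1 ->
    (pw cp.2.+1 %| sval x N * sval x N - sval d N - pw cp.2)%Z.
  move=> hcp hx; case/memL: hcp => hq hN _.
  have hH := Qp_HYP hq.
  have := hH (sval x N); rewrite /cg => h.
  have h' : (pw cp.2 %| sval x N - cp.1)%Z.
    have := sval_cg x (ltnW hN); rewrite /cg => h1.
    have ->: sval x N - cp.1 = (sval x N - sval x cp.2) + (sval x cp.2 - cp.1) by ring.
    apply: rpredD => //; rewrite -hx; exact: cg_sym (cg_mod _ _).
  have := h h'; have := sval_cg d hN; rewrite /cg => h2 h3.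
  have ->: sval x N * sval x N - sval d N - pw cp.2 =
    (sval x N * sval x N - sval d cp.2.+1 - pw cp.2) - (sval d N - sval d cp.2.+1) by ring.
  exact: rpredB.
have uniqP cp cp' x : cp \in L -> cp' \in L -> res x cp.2 = cp.1 -> res x cp'.2 = cp'.1 -> cp = cp'.
  move=> h1 h2 e1 e2.
  have l1 := levP _ _ h1 e1; have l2 := levP _ _ h2 e2.
  have key : forall p q, (p < q)%N -> (pw p.+1 %| sval x N * sval x N - sval d N - pw p)%Z ->
     (pw q.+1 %| sval x N * sval x N - sval d N - pw q)%Z -> False.
    move=> p q hpq hp hq; apply: (@not_pw_dvd p).
    have a1 : (pw p.+1 %| sval x N * sval x N - sval d N - pw q)%Z
      by apply: dvdz_trans hq; apply: pw_dvd; lia.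
    have a2 : (pw p.+1 %| pw q)%Z by apply: pw_dvd.
    have ->: pw p = (sval x N * sval x N - sval d N - pw q) + pw q -
       (sval x N * sval x N - sval d N - pw p) by ring.
    by apply: rpredB => //; apply: rpredD.
  case: cp cp' h1 h2 e1 e2 l1 l2 => c p [c' p'] /= h1 h2 e1 e2 l1 l2.
  case: (ltngtP p p') => hpp.
  - by exfalso; exact: key hpp l1 l2.
  - by exfalso; exact: key hpp l2 l1.
  by subst p'; rewrite -e1 -e2.
have cover x : res x 1 = 0 -> has (fun cp => res x cp.2 == cp.1) L.
  move=> hx1.
  set a := sval x N; set z := a * a - sval d N.
  have hz : ~ (pw N %| z)%Z by exact: hb.
  have hN1 : (1 <= N)%N by rewrite /N; lia.
  have hN2 : (2 <= N)%N by rewrite /N; lia.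
  have ha2 : (2 %| a)%Z.
    have := sval_cg x hN1; rewrite /cg => h.
    have ->: a = (a - sval x 1) + sval x 1 by ring.
    apply: rpredD => //; exact/(res0E x 1).
  have hz4 : (pw 2 %| z)%Z.
    rewrite /z; apply: rpredB.
      by have ->: pw 2 = 2 * 2 by []; apply: dvdz_mul.
    have := sval_cg d hN2; rewrite /cg => h.
    have ->: sval d N = (sval d N - sval d 2) + sval d 2 by ring.
    by apply: rpredD => //; apply/res0E.
  have exP : exists k, (pw k %| z)%Z by exists 2%N.
  have ubP : forall k, (pw k %| z)%Z -> (k <= N.-1)%N.
    move=> k hk; rewrite -ltnS prednK //; rewrite ltnNge; apply/negP => hNk; apply: hz.
    exact: dvdz_trans (pw_dvd hNk) hk.
  case: (ex_maxnP exP ubP) => p hp hmax.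
  have hp2 : (2 <= p)%N by exact: hmax.
  have hpN : (p < N)%N by have := ubP p hp; rewrite /N; lia.
  have hp1 : ~ (pw p.+1 %| z)%Z by move=> h; have := hmax _ h; rewrite ltnn.
  case/dvdzP: hp => s hs.
  have hs1 : (2 %| s - 1)%Z.
    case: (par s) => // h; exfalso; apply: hp1; rewrite hs pwS; exact: dvdz_mul.
  set c := res x p.
  have hcr : 0 <= c < pw p by exact: mod_range.
  have hcL : (c, p) \in L.
    rewrite mem_filter pairs_in // andbT; apply/and3P; split => //=.
    - have : cg 1 c a.
        apply: cg_trans (cg_le (ltnW hp2) (cg_mod _ _)) _.
        exact: cg_sym (cg_le (ltnW hp2) (sval_cg x (ltnW hpN))).
      rewrite /cg => h; have ->: c = (c - a) + a by ring. exact: rpredD.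
    - have hca : cg p c a.
        apply: cg_trans (cg_mod _ _) _; exact: cg_sym (sval_cg x (ltnW hpN)).
      have ->: c * c - sval d p.+1 - pw p =
          (c - a) * (c + a) + (z - pw p) + (sval d N - sval d p.+1) by rewrite /z; ring.
      apply: rpredD; first apply: rpredD.
      + rewrite pwS mulrC; apply: dvdz_mul => //.
        have ->: c + a = (c - a) + 2 * a by ring.
        apply: rpredD; last exact: dvdz_mulr.
        apply: dvdz_trans hca; apply: (@pw_dvd 1 p); lia.
      + have ->: z - pw p = (s - 1) * pw p by rewrite hs; ring.
        by rewrite pwS; apply: dvdz_mul.
      + exact: (sval_cg d hpN).
  by apply/hasP; exists (c, p) => //=.
set Es := [seq ball cp.1 cp.2 | cp <- L].
exists Es; split.
  apply: (@DU_of_idx _ _ (fun x => find (fun cp => res x cp.2 == cp.1) L)).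
    by move=> x /ball01 h; rewrite size_map -has_find; exact: cover.
  move=> x i; rewrite size_map => hi.
  rewrite (nth_map (0, 0%N)) //.
  have hin : nth (0, 0%N) L i \in L by exact: mem_nth.
  rewrite (ballE _ _ hin); split.
    move=> hx; split.
      apply/ball01; rewrite (res_low x (m := 1) (n := (nth (0, 0%N) L i).2)); last first.
        by case/memL: hin => /and3P [_ h _] _ _; exact: leq_trans _ h.
      rewrite hx; apply/dvdz_mod0P; by case/memL: hin => /and3P [].
    set j := find _ _.
    have hhas : has (fun cp => res x cp.2 == cp.1) L by apply/hasP; exists (nth (0, 0%N) L i) => //; exact/eqP.
    have hj : (j < size L)%N by rewrite -has_find.
    case: (ltngtP j i) => // hji.
    - have := nth_find (0, 0%N) hhas; rewrite -/j => /eqP hxj.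
      have e := uniqP _ _ x (mem_nth (0, 0%N) hj) hin hxj hx.
      by move/eqP: e; rewrite nth_uniq // => /eqP h; move: hji; rewrite h ltnn.
    - by have := before_find (0, 0%N) hji; rewrite hx eqxx.
  case=> /ball01 h1 hj.
  have hhas : has (fun cp => res x cp.2 == cp.1) L by exact: cover.
  by have := nth_find (0, 0%N) hhas; rewrite hj => /eqP.
move=> i; rewrite size_map => hi; rewrite (nth_map (0, 0%N)) //.
have hin : nth (0, 0%N) L i \in L by exact: mem_nth.
case/memL: hin => hq _ _.
have hH := Qp_HYP hq.
case/and3P: hq => hc hp _.
exact: minc_of_HYP.
Qed.


Lemma res_nat (x : Z2) M : exists i : nat, (i < 2 ^ M)%N /\ res x M = Posz i.
Proof.
have /andP [h0 h1] := res_range x M.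
exists (absz (res x M)); rewrite gez0_abs //; split => //.
by rewrite -ltz_nat gez0_abs.
Qed.

Lemma DU_fin (cs : seq (int * nat)) M (idxf : int -> nat) :
  (1 <= M)%N -> all (fun cp => cp.2 <= M)%N cs ->
  all (fun i : nat => let r := Posz i in
     ((r %% pw 1 == 0)%Z ==> (idxf r < size cs)%N) &&
     all (fun j => ((r %% pw (nth (0, 0%N) cs j).2 == (nth (0, 0%N) cs j).1 %% pw (nth (0, 0%N) cs j).2)%Z
          == ((r %% pw 1 == 0)%Z && (idxf r == j))))
       (iota 0 (size cs))) (iota 0 (2 ^ M)) ->
  disjoint_union (ball 0 1) [seq ball cp.1 cp.2 | cp <- cs].
Proof.
move=> hM hcs hall.
apply: (@DU_of_idx _ _ (fun x => idxf (res x M))).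
  move=> x /ball01 h1; rewrite size_map.
  have [i [hi e]] := res_nat x M.
  move/allP: hall => /(_ i); rewrite mem_iota hi => /(_ isT) /andP [/implyP h _].
  rewrite e; apply: h; rewrite -e -(res_low x hM) h1 //.
move=> x i; rewrite size_map => hi.
rewrite (nth_map (0, 0%N)) //.
set cp := nth (0, 0%N) cs i.
have hk : (cp.2 <= M)%N by move/allP: hcs; apply; exact: mem_nth.
have [r [hr e]] := res_nat x M.
move/allP: hall => /(_ r); rewrite mem_iota hr => /(_ isT) /andP [_ /allP /(_ i)].
rewrite mem_iota hi => /(_ isT) /eqP hb.
rewrite ball01 /ball (res_low x hk) (res_low x hM) e -/cp.
split.
  by move=> h; have := hb; rewrite h eqxx => /esym /andP [/eqP -> /eqP ->].
case=> [h1 h2]; apply/eqP; by rewrite hb h1 h2 !eqxx.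
Qed.

Lemma DU1 : disjoint_union (ball 0 1) [:: ball 0 2; ball 2 3; ball 6 3].
Proof.
apply: (@DU_fin [:: (0, 2%N); (2, 3%N); (6, 3%N)] 4
   (fun r => if (r %% 4 == 0)%Z then 0%N else if (r %% 8 == 2)%Z then 1%N else 2%N)) => //.
Qed.

Lemma DU2 : disjoint_union (ball 0 1) [:: ball 0 2; ball 2 4; ball 6 4; ball 10 4; ball 14 4].
Proof.
apply: (@DU_fin [:: (0, 2%N); (2, 4%N); (6, 4%N); (10, 4%N); (14, 4%N)] 4
   (fun r => if (r %% 4 == 0)%Z then 0%N else if (r == 2)%Z then 1%N else
     if (r == 6) then 2%N else if (r == 10) then 3%N else 4%N)) => //.
Qed.


Lemma partA d : res d 2 = 0 -> forall x : Z2, ball 1 1 x -> ball 0 1 (fmap d x).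
Proof.
move=> hd x /ball_cg hx; apply/ball_cg.
have hd1 : (pw 1 %| sval d 1%N)%Z := res0_low hd (isT : (1 <= 2)%N).
move: hx hd1; rewrite /cg /= => /dvdzP [q hq] /dvdzP [r hr].
have e1 : pw 1 = 2 by [].
rewrite e1 in hq hr *; apply/dvdzP.
exists ((1 + 3 * q + 2 * q * q) - r).
have ->: sval x 1%N = 1 + q * 2 by rewrite -hq; ring.
rewrite hr /F; ring.
Qed.

Lemma HYP_w4 d w : (w <= 4)%N -> val2 (Z2sub d (Z2const 4)) w -> HYP d (pw 1) 2 w.
Proof.
move=> hw hv; apply: HYP_pow; [by [] | by [] | ].
have := val2_exact hv; rewrite /= => h.
have ->: pw (2 * 2 - 2) - sval d w.+1 - pw w = - (sval d w.+1 + - 4 - pw w) - pw w.+1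
  by rewrite pwS; have ->: pw (2 * 2 - 2) = 4 by []; ring.
by apply: rpredB; [rewrite rpredN|apply: dvdzz].
Qed.

Lemma part12 d c k w : (w <= 4)%N -> w = k -> (2 <= k)%N -> val2 (Z2sub d (Z2const 4)) w ->
  (pw 2 %| c - 2)%Z -> minimal_component d (ball c k).
Proof.
move=> hw ek hk hv hc; subst k.
apply: minc_of_HYP => //.
  have ->: c = (c - 2) + 2 by ring.
  apply: rpredD => //; exact: dvdz_trans (isT : (2 %| pw 2)%Z) hc.
apply: HYP_sub (HYP_w4 hw hv) _ hk; exact: hc.
Qed.

Lemma ball02 d : val2 d 2 -> minimal_component d (ball 0 2).
Proof.
move=> hv; apply: minc_of_HYP => //; apply: HYP_zero => //.
have := val2_exact hv => h.
have ->: - sval d 3%N - pw 2 = - (sval d 3%N - pw 2) - pw 3 by rewrite (pwS 2); ring.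
by apply: rpredB; [rewrite rpredN|apply: dvdzz].
Qed.


Lemma even_pw n : (2 <= n)%N -> (2 %| pw n.-1)%Z.
Proof. move=> h; apply: (@pw_dvd 1 n.-1); lia. Qed.

Lemma typeI_pow d v n : val2 d v -> (2 <= n)%N -> (2 * n - 1 <= v)%N ->
  typeI d n (pw n.-1) (n - 2).
Proof.
move=> hv hn hnv.
have hH : HYP d (pw n.-1) n (2 * n - 2).
  apply: HYP_pow; [lia | lia |].
  have ->: pw (2 * n - 2) - sval d (2 * n - 2).+1 - pw (2 * n - 2) = - sval d (2 * n - 2).+1 by ring.
  rewrite rpredN; apply: (res0_low (proj1 hv)); lia.
have := typeI_of_HYP hn _ (even_pw hn) hH.
have -> : (2 * n - 2 - n = n - 2)%N by lia.
apply; lia.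
Qed.

Lemma typeI_zero d v n k : val2 d v -> (2 <= n)%N -> (n <= v)%N -> (v.+1 <= 2 * n)%N ->
  k = (v - n)%N -> typeI d n 0 k.
Proof.
move=> hv hn hnv hv2 ->.
apply: typeI_of_HYP => //; apply: HYP_zero => //.
have := val2_exact hv => h.
have ->: - sval d v.+1 - pw v = - (sval d v.+1 - pw v) - pw v.+1 by rewrite pwS; ring.
by apply: rpredB; [rewrite rpredN|apply: dvdzz].
Qed.

Lemma typeI_w d v w : nonsq d -> val2 d v -> ~~ odd v -> (3 <= v)%N ->
  val2 (Z2sub d (Z2const (pw v))) w -> typeI d (v./2).+1 (pw (v./2).+1.-1) (w - (v./2).+1).
Proof.
move=> hns hv hev hv3 hw.
have ev : v = (v./2 + v./2)%N by have := odd_double_half v; rewrite (negbTE hev) add0n -addnn.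
set j := v./2 in ev *.
have hw2 : (w <= v + 2)%N.
  rewrite leqNgt; apply/negP => hlt; apply: hns.
  have h3 := res0_low (proj1 hw) hlt; rewrite /= in h3.
  apply: (@hensel d (pw j) j 1); first by rewrite mulr1.
    by rewrite subrr dvdz0.
  have e : (2 * j + 3 = v + 3)%N by lia.
  rewrite e -pwD -ev.
  have ->: pw v - sval d (v + 3)%N = - (sval d (v + 3)%N + - pw v) by ring.
  have e3 : ((v + 2).+1 = v + 3)%N by lia. by rewrite rpredN -e3.
have hvw : (v <= w)%N.
  rewrite leqNgt; apply/negP => hlt; case: hw => _; apply; apply/res0E => /=.
  apply: rpredB; first by apply: (res0_low (proj1 hv)).
  exact: pw_dvd.
apply: typeI_of_HYP; [lia | lia | apply: even_pw; lia |].
apply: HYP_pow; [lia | lia |].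
have := val2_exact hw; rewrite /= => h.
have e : ((2 * j.+1 - 2) = v)%N by lia.
rewrite e.
have ->: pw v - sval d w.+1 - pw w = - (sval d w.+1 + - pw v - pw w) - pw w.+1 by rewrite pwS; ring.
by apply: rpredB; [rewrite rpredN|apply: dvdzz].
Qed.

Unset Implicit Arguments. Set Strict Implicit.

Theorem theorem6p6 (d : Z2) :
  res d 2 = 0 ->
  ~ (exists y : Z2, eqZ2 (Z2mul y y) d) ->
  (forall x : Z2, ball 1 1 x -> ball 0 1 (fmap d x)) /\
  (exists Es : seq (Z2 -> Prop), min_decomp d (ball 0 1) Es) /\
  (forall v : nat, val2 d v ->
    let n0 := (v./2).+1 in
    (* (1) *)
    (v = 2%N -> val2 (Z2sub d (Z2const 4)) 3 ->
       min_decomp d (ball 0 1) [:: ball 0 2; ball 2 3; ball 6 3]) /\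
    (* (2) *)
    (v = 2%N -> val2 (Z2sub d (Z2const 4)) 4 ->
       min_decomp d (ball 0 1)
         [:: ball 0 2; ball 2 4; ball 6 4; ball 10 4; ball 14 4]) /\
    (* (3) *)
    ((3 <= v)%N -> odd v ->
       disjoint_union (ball 0 1)
         ([seq ball (pw n.-1) n | n <- iota 2 n0.-1] ++ [:: ball 0 n0]) /\
       (forall n : nat, (2 <= n <= n0)%N -> typeI d n (pw n.-1) (n - 2)) /\
       typeI d n0 0 n0.-1) /\
    (* (4) *)
    ((3 <= v)%N -> ~~ odd v ->
       disjoint_union (ball 0 1)
         ([seq ball (pw n.-1) n | n <- iota 2 (n0 - 2)]
            ++ [:: ball 0 n0; ball (pw n0.-1) n0]) /\
       (forall n : nat, (2 <= n <= n0.-1)%N -> typeI d n (pw n.-1) (n - 2)) /\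
       typeI d n0 0 (n0 - 2) /\
       (forall w : nat, val2 (Z2sub d (Z2const (pw v))) w ->
          typeI d n0 (pw n0.-1) (w - n0)))).
Proof.
move=> hd2 hns; split; first exact: partA.
split; first exact: exist_decomp.
move=> v hv n0.
have hv2 : (2 <= v)%N.
  rewrite leqNgt; apply/negP => hlt; case: hv => _; apply; apply/res0E.
  exact: res0_low hd2 hlt.
split.
  move=> ev hw; subst v; split; first exact: DU1.
  case=> [|[|[|]]] //= _.
  - exact: ball02.
  - exact: (@part12 d 2 3 3).
  - exact: (@part12 d 6 3 3).
split.
  move=> ev hw; subst v; split; first exact: DU2.
  case=> [|[|[|[|[|]]]]] //= _.
  - exact: ball02.
  - exact: (@part12 d 2 4 4).
  - exact: (@part12 d 6 4 4).
  - exact: (@part12 d 10 4 4).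
  - exact: (@part12 d 14 4 4).
have hdh := odd_double_half v.
split.
  move=> hv3 hodd; rewrite hodd in hdh.
  have en0 : (2 * n0 = v + 1)%N by rewrite /n0; lia.
  split; first by apply: DU3; rewrite /n0.
  split.
    move=> n /andP [h1 h2]; apply: (typeI_pow hv h1); lia.
  apply: (typeI_zero hv); rewrite /n0; lia.
move=> hv3 hev; rewrite (negbTE hev) add0n in hdh.
have en0 : (2 * n0 = v + 2)%N by rewrite /n0; lia.
split; first by apply: DU4; rewrite /n0; lia.
split.
  move=> n /andP [h1 h2]; apply: (typeI_pow hv h1); lia.
split.
  apply: (typeI_zero hv); rewrite /n0; lia.
move=> w hw; exact: (typeI_w hns hv hev hv3 hw).
Qed.
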